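(* For $\alpha\in\mathbb{K}^\times$ let $A_{8,\alpha}$ be the evolution algebra over the field $\mathbb{K}$ with natural basis $\{u,v\}$ such that $u^2=u$ and $v^2=\alpha u$. For $\alpha,\beta\in\mathbb{K}^\times$, $A_{8,\alpha}$ and $A_{8,\beta}$ are isomorphic if and only if $\overline\alpha=\overline\beta$ in $G_2=\mathbb{K}^\times/(\mathbb{K}^\times)^2$.
   Context: An evolution algebra over $\mathbb{K}$ is a $\mathbb{K}$-algebra with a basis $\{e_i\}$ (natural basis) such that $e_ie_j=0$ for $i\neq j$. $\overline\rho$ denotes the class of $\rho\in\mathbb{K}^\times$ in $G_2$. *)

(* Defs.v *)
From HB Require Import structures.
From mathcomp Require Import all_boot all_order all_algebra.
Set Implicit Arguments. Unset Strict Implicit. Unset Printing Implicit Defensive.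
Import GRing.Theory.
Local Open Scope ring_scope.

(* An n-dimensional evolution algebra over a field K, presented in a natural
   basis e_0, ..., e_(n-1): elements are row vectors of coordinates, and the
   structure matrix C gives e_i * e_i = sum_j C i j e_j, e_i * e_j = 0 (i<>j). *)
Definition evo_mul (K : fieldType) (n : nat) (C : 'M[K]_n)
  (x y : 'rV[K]_n) : 'rV[K]_n :=
  \sum_(i < n) (x 0 i * y 0 i) *: row i C.

Definition evo_iso (K : fieldType) (n : nat) (C D : 'M[K]_n) : Prop :=
  exists f : 'rV[K]_n -> 'rV[K]_n,
    [/\ forall (a : K) (x y : 'rV[K]_n), f (a *: x + y) = a *: f x + f y,
        bijective f &
        forall x y : 'rV[K]_n, f (evo_mul C x y) = evo_mul D (f x) (f y)].

(* A_{8,alpha}: natural basis {u, v} = {e_0, e_1},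
   u^2 = u, v^2 = alpha u. *)
Definition A8 (K : fieldType) (alpha : K) : 'M[K]_2 :=
  \matrix_(i < 2, j < 2)
    (if j == 0 then (if i == 0 then 1 else alpha) else 0).

Definition sq_class_eq (K : fieldType) (alpha beta : K) : Prop :=
  exists gamma : K, gamma != 0 /\ alpha = beta * gamma ^+ 2.

(* Main.v *)
Require Import Defs.
From mathcomp Require Import all_boot all_order all_algebra.
From mathcomp Require Import ring.
Local Open Scope ring_scope.
Import GRing.Theory.

Lemma evo_A8E (K : fieldType) (a : K) (x y : 'rV[K]_2) :
  evo_mul (A8 a) x y =
  \row_(j < 2) (if j == 0 then x 0 0 * y 0 0 + a * (x 0 1 * y 0 1) else 0).
Proof.
apply/rowP => j; rewrite /evo_mul summxE !big_ord_recl big_ord0 !mxE /=.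
have E1 : lift ord0 ord0 = 1 :> 'I_2 by apply: val_inj.
have E0 : ord0 = 0 :> 'I_2 by apply: val_inj.
rewrite E1 E0. case: j => [[|[|]]] //= _; rewrite ?mulr1 ?mulr0 ?addr0 ?add0r //; rewrite [_ * a]mulrC; reflexivity.
Qed.

Lemma rV2P (K : fieldType) (p : 'rV[K]_2) :
  p 0 0 = 0 -> p 0 1 = 0 -> p = 0.
Proof.
move=> h0 h1; apply/rowP => j; rewrite mxE.
case: j => [[|[|//]]] Hj; [rewrite -h0 | rewrite -h1]; congr (p 0 _); exact: val_inj.
Qed.

Theorem lemma3p17 (K : fieldType) (alpha beta : K) :
  alpha != 0 -> beta != 0 ->
  (evo_iso (A8 alpha) (A8 beta) <-> sq_class_eq alpha beta).
Proof.
move=> ha hb; split.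
- move=> [f [lin bij mul]].
  have f0 : f 0 = 0.
    have := lin 1 0 0; rewrite !scale1r addr0.
    by move/(congr1 (fun z => z - f 0)); rewrite /= subrr addrK => <-.
  pose u : 'rV[K]_2 := delta_mx 0 0.
  pose w : 'rV[K]_2 := delta_mx 0 1.
  have uu : evo_mul (A8 alpha) u u = u.
    apply/rowP => j; rewrite evo_A8E !mxE.
    by case: j => [[|[|]]] //= _; rewrite mulr1 mulr0 mulr0 addr0.
  have ww : evo_mul (A8 alpha) w w = alpha *: u.
    apply/rowP => j; rewrite evo_A8E !mxE.
    by case: j => [[|[|]]] //= _; rewrite ?mulr0 ?mul0r ?add0r ?mulr1.
  have uw : evo_mul (A8 alpha) u w = 0.
    apply/rowP => j; rewrite evo_A8E !mxE.
    by case: j => [[|[|]]] //= _; rewrite ?mulr0 ?mul0r ?add0r ?mulr1 ?mulr0.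
  have fa : f (alpha *: u) = alpha *: f u.
    by have := lin alpha u 0; rewrite !addr0 f0 addr0.
  have e1 := mul u u; rewrite uu evo_A8E in e1.
  have e2 := mul w w; rewrite ww fa evo_A8E in e2.
  have e3 := mul u w; rewrite uw f0 evo_A8E in e3.
  move/rowP: e1 => e1; move/rowP: e2 => e2; move/rowP: e3 => e3.
  have e1a := e1 0; have e1b := e1 1; have e2a := e2 0; have e3a := e3 0.
  rewrite /= !mxE /= in e1a e1b e2a e3a.
  have pn : f u 0 0 != 0.
    apply/negP => /eqP h.
    have : f u = f 0 by rewrite f0; apply: rV2P.
    move/(bij_inj bij) => /rowP /(_ 0); rewrite !mxE.
    by move/eqP; rewrite oner_eq0.
  rewrite e1b ?mulr0 ?mul0r ?addr0 in e1a e3a.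
  have p1 : f u 0 0 = 1.
    apply: (mulfI pn); rewrite mulr1; exact/esym.
  rewrite p1 mul1r in e3a e2a.
  rewrite ?mulr0 ?addr0 in e3a. rewrite -e3a ?mulr0 ?mul0r ?add0r ?mulr1 in e2a.
  exists (f w 0 1); split.
    apply/negP => /eqP h; move: e2a; rewrite h mulr0 mulr0 => /eqP.
    by rewrite (negbTE ha).
  by rewrite e2a expr2.
- move=> [g [gn ->]].
  pose f (x : 'rV[K]_2) : 'rV[K]_2 := \row_(j < 2) (if j == 0 then x 0 0 else g * x 0 1).
  pose h (x : 'rV[K]_2) : 'rV[K]_2 := \row_(j < 2) (if j == 0 then x 0 0 else g^-1 * x 0 1).
  exists f; split.
  + move=> a x y; apply/rowP => j; rewrite !mxE.
    by case: (j == 0) => //; ring.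
  + exists h => x; apply/rowP => j; rewrite !mxE /= mulrA ?mulVf ?mulfV ?mul1r //;
      by case: j => [[|[|//]]] Hj; congr (x 0 _); apply: val_inj.
  + move=> x y; apply/rowP => j; rewrite !evo_A8E !mxE /=.
    case: (j == 0) => //; ring.
Qed.
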